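(* Let $g>0$, $k_1,k_2,\omega\in\mathbb{R}$ with $k_2<0<k_1$, and consider the undamped system $$\ddot x-2\omega\dot y+(gk_1-\omega^2)x=0,\qquad \ddot y+2\omega\dot x+(gk_2-\omega^2)y=0.$$ (i) If $k_1>-k_2$, then all eigenvalues of this system are purely imaginary and simple if and only if $\omega^2>gk_1$. (ii) If $k_1<-k_2$ and $3k_1+k_2>0$, then all eigenvalues are purely imaginary and simple if and only if $$gk_1<\omega^2<-\frac{g}{8}\frac{(k_1-k_2)^2}{k_1+k_2}.$$ (iii) If $k_1<-k_2$ and $3k_1+k_2<0$, then for no $\omega$ are all eigenvalues purely imaginary and simple.
   Context: The eigenvalues are the roots $\lambda$ of $(\lambda^2+gk_1-\omega^2)(\lambda^2+gk_2-\omega^2)+4\omega^2\lambda^2=0$ (the model of a point mass near the bottom of a vessel rotating with angular velocity $\omega$, $k_1,k_2$ the curvatures of the vessel's surface at the equilibrium). *)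

(* Defs.v *)
(* Complex numbers: an arbitrary numClosedFieldType C
   (e.g. the complex numbers); the real parameters are real elements of C. *)
From HB Require Import structures.
From mathcomp Require Import all_boot all_order all_algebra.
Set Implicit Arguments. Unset Strict Implicit. Unset Printing Implicit Defensive.
Import Order.TTheory GRing.Theory Num.Theory.
Local Open Scope ring_scope.

(* characteristic polynomial of the rotating-vessel system:
   (l^2 + g k1 - w^2)(l^2 + g k2 - w^2) + 4 w^2 l^2 *)
Definition vessel_poly (C : numClosedFieldType) (g k1 k2 w : C) : {poly C} :=
  ('X^2 + (g * k1 - w ^+ 2)%:P) * ('X^2 + (g * k2 - w ^+ 2)%:P)
  + (4 * w ^+ 2)%:P * 'X^2.

Definition all_pure_imag_simple (C : numClosedFieldType) (p : {poly C}) : Prop :=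
  forall l : C, root p l -> 'Re l = 0 /\ mup l p = 1%N.

(* Main.v *)
Require Import Defs.
From HB Require Import structures.
From mathcomp Require Import all_boot all_order all_algebra ring.
Import Order.TTheory GRing.Theory Num.Theory.
Local Open Scope ring_scope.


Lemma mup1P {R : fieldType} {p : {poly R}} {l : R} :
  p != 0 -> root p l -> (mup l p = 1)%N <-> ~~ root p^`() l.
Proof.
move=> p0 /factor_theorem [q pq]; subst p.
have q0 : q != 0 by apply: contraNneq p0 => ->; rewrite mul0r.
have X0 : 'X - l%:P != 0 by rewrite polyXsubC_eq0.
have -> : root (q * ('X - l%:P))^`() l = root q l.
  by rewrite /root derivM derivXsubC !hornerE subrr mulr0 add0r ?mulr1.
case: (boolP (root q l)) => rq /=.
  rewrite mupM // (@mup_XsubCX _ 1) eqxx.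
  have : (0 < mup l q)%N by rewrite -XsubC_dvd // dvdp_XsubCl.
  by move=> h; split => // E; move: E h; rewrite addn1 => -[->].
by split => // _; rewrite mupMr // (@mup_XsubCX _ 1) eqxx.
Qed.

Section K.
Variable C : numClosedFieldType.
Variables a b c : C.
Definition Q : {poly C} := ('X^2 + a%:P) * ('X^2 + b%:P) + c%:P * 'X^2.
Local Notation T := (a + b + c).
Local Notation D := (a * b).

Lemma hQ x : Q.[x] = x^+4 + T * x^+2 + D.
Proof. rewrite /Q !hornerE /=. ring. Qed.

Lemma hQ' x : Q^`().[x] = 2 * x * (2 * x^+2 + T).
Proof. rewrite /Q !derivE !hornerE /=. ring. Qed.

Lemma Q0 : Q != 0.
Proof.
apply/negP => /eqP E.
have h0 := hQ 0; have h1 := hQ 1; have h2 := hQ 2.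
rewrite E !horner0 in h0 h1 h2.
have : (12 : C) = 0.
  transitivity ((2^+4 + T * 2^+2 + D) - 4 * (1^+4 + T * 1^+2 + D) + 3 * (0^+4 + T * 0^+2 + D)).
    by ring.
  by rewrite -h2 -h1 -h0; ring.
by move/eqP; rewrite pnatr_eq0.
Qed.

Hypotheses (ra : a \is Num.real) (rb : b \is Num.real) (rc : c \is Num.real).

Lemma key_back : 0 < T -> 0 < D -> 0 < T^+2 - 4 * D -> all_pure_imag_simple Q.
Proof.
move=> HT HD HDelta l rl.
have Em : (l^+2)^+2 + T * l^+2 + D = 0.
  by move: rl; rewrite /root hQ => /eqP <-; ring.
set m := l^+2 in Em.
set r := sqrtC (T^+2 - 4 * D).
have r0 : 0 < r by rewrite sqrtC_gt0.
have rr : r ^+ 2 = T^+2 - 4 * D by rewrite sqrtCK.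
have Tr : 0 < T - r.
  have h : (T - r) * (T + r) = 4 * D.
    transitivity (T^+2 - r^+2); first by ring.
    by rewrite rr; ring.
  have : 0 < (T - r) * (T + r) by rewrite h mulr_gt0 // ltr0n.
  by rewrite pmulr_lgt0 // addr_gt0.
have : (2 * m + T) ^+ 2 == r ^+ 2.
  apply/eqP; rewrite rr.
  transitivity (4 * (m^+2 + T * m + D) + (T^+2 - 4 * D)); first by ring.
  by rewrite Em; ring.
rewrite eqf_sqr => he.
have [e [ee ere eT e0]] : exists e, [/\ 2 * m + T = e, e \is Num.real, e - T < 0 & e != 0].
  case/orP: he => /eqP ->; [exists r | exists (- r)]; split => //.
  - exact: gtr0_real.
  - by rewrite subr_lt0 -subr_gt0.
  - exact: lt0r_neq0.
  - by rewrite rpredN gtr0_real.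
  - by rewrite -opprD oppr_lt0 addr_gt0.
  - by rewrite oppr_eq0 lt0r_neq0.
have mE : m = (e - T) / 2 by rewrite -ee; field.
have mlt0 : m < 0 by rewrite mE pmulr_llt0 // invr_gt0 ltr0n.
have l0 : l != 0 by apply: contraTneq mlt0 => E; rewrite /m E expr0n /= ltxx.
split.
  have : (l^*) ^+ 2 == l ^+ 2.
    by rewrite -rmorphXn -/m; apply/eqP/CrealP; exact: ltr0_real.
  rewrite eqf_sqr => /orP [/eqP E|/eqP E].
    have : l \is Num.real by rewrite CrealE E.
    by rewrite realEsqr -/m => /le_lt_trans/(_ mlt0); rewrite ltxx.
  by rewrite ReE E subrr mul0r.
apply/mup1P => //; first exact: Q0.
by rewrite /root hQ' -/m ee !mulf_neq0 // pnatr_eq0.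
Qed.

Lemma key_fwd : all_pure_imag_simple Q -> [/\ 0 < T, 0 < D & 0 < T^+2 - 4 * D].
Proof.
move=> H.
have Hr : forall l, root Q l -> l^+2 <= 0.
  move=> l /H [Re0 _]; rewrite (Crect l) Re0 add0r exprMn sqrCi mulN1r oppr_le0.
  by rewrite -realEsqr Creal_Im.
have Hd : forall l, root Q l -> 2 * l * (2 * l^+2 + T) != 0.
  move=> l rl; have [_ m1] := H l rl.
  by have := (mup1P Q0 rl).1 m1; rewrite /root hQ'.
have D0 : D != 0.
  apply/negP => /eqP D0.
  have r0 : root Q 0 by apply/eqP; rewrite hQ D0; ring.
  by move: (Hd 0 r0); rewrite mulr0 mul0r eqxx.
set r := sqrtC (T^+2 - 4 * D).
have rr : r ^+ 2 = T^+2 - 4 * D by rewrite sqrtCK.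
have rootm : forall m, m^+2 + T * m + D = 0 -> root Q (sqrtC m).
  move=> m Em; apply/eqP; rewrite hQ.
  rewrite (_ : sqrtC m ^+ 4 = (sqrtC m ^+ 2) ^+ 2); last by rewrite -exprM.
  by rewrite sqrtCK.
set m1 := (r - T) / 2; set m2 := (- r - T) / 2.
have E1 : m1^+2 + T * m1 + D = 0.
  transitivity ((r^+2 - (T^+2 - 4 * D)) / 4); first by rewrite /m1; field.
  by rewrite rr subrr mul0r.
have E2 : m2^+2 + T * m2 + D = 0.
  transitivity ((r^+2 - (T^+2 - 4 * D)) / 4); first by rewrite /m2; field.
  by rewrite rr subrr mul0r.
have r1 := rootm _ E1; have r2 := rootm _ E2.
have m1le := Hr _ r1; have m2le := Hr _ r2.
rewrite sqrtCK in m1le; rewrite sqrtCK in m2le.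
have Dm : m1 * m2 = D.
  transitivity ((T^+2 - r^+2) / 4); first by rewrite /m1 /m2; field.
  by rewrite rr; field.
have m1n0 : m1 != 0 by apply: contraNneq D0 => E; rewrite -Dm E mul0r.
have m2n0 : m2 != 0 by apply: contraNneq D0 => E; rewrite -Dm E mulr0.
have m1lt : m1 < 0 by rewrite lt_neqAle m1n0.
have m2lt : m2 < 0 by rewrite lt_neqAle m2n0.
have rn0 : r != 0.
  apply: contraNneq (Hd _ r1) => r0.
  rewrite sqrtCK (_ : 2 * m1 + T = r); last by rewrite /m1; field.
  by rewrite r0 mulr0.
have rE : r = m1 - m2 by rewrite /m1 /m2; field.
have rreal : r \is Num.real by rewrite rE rpredB // ltr0_real.
split.
- have -> : T = (- m1) + (- m2) by rewrite /m1 /m2; field.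
  by rewrite addr_gt0 // oppr_gt0.
- by rewrite -Dm -mulrNN mulr_gt0 // oppr_gt0.
- by rewrite -rr lt_def expf_neq0 //= -realEsqr.
Qed.
End K.
Arguments Q {C}.
Arguments key_fwd {C a b c}.
Arguments key_back {C a b c}.


Lemma vesselE (C : numClosedFieldType) (g k1 k2 w : C) :
  vessel_poly g k1 k2 w = Q (g * k1 - w ^+ 2) (g * k2 - w ^+ 2) (4 * w ^+ 2).
Proof. by []. Qed.

Theorem mainTheorem7 (C : numClosedFieldType) (g k1 k2 : C)
  (hg : 0 < g) (hk2 : k2 < 0) (hk1 : 0 < k1) :
  (k1 > - k2 ->
     forall w : C, w \is Num.real ->
       (all_pure_imag_simple (vessel_poly g k1 k2 w) <-> (g * k1 < w ^+ 2))) /\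
  (k1 < - k2 -> 0 < 3 * k1 + k2 ->
     forall w : C, w \is Num.real ->
       (all_pure_imag_simple (vessel_poly g k1 k2 w) <->
        g * k1 < w ^+ 2 /\ w ^+ 2 < - (g / 8) * ((k1 - k2) ^+ 2 / (k1 + k2)))) /\
  (k1 < - k2 -> 3 * k1 + k2 < 0 ->
     forall w : C, w \is Num.real ->
       ~ all_pure_imag_simple (vessel_poly g k1 k2 w)).
Proof.
have rg := gtr0_real hg; have rk1 := gtr0_real hk1; have rk2 := ltr0_real hk2.
have gk1 : 0 < g * k1 by rewrite mulr_gt0.
have gk2 : g * k2 < 0 by rewrite pmulr_rlt0.
have KEY : forall w : C, w \is Num.real ->
  (all_pure_imag_simple (vessel_poly g k1 k2 w) <->
   [/\ 0 < g * (k1 + k2) + 2 * w ^+ 2, g * k1 < w ^+ 2 &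
        0 < g ^+ 2 * (k1 - k2) ^+ 2 + 8 * g * w ^+ 2 * (k1 + k2)]).
  move=> w rw.
  have w2 : 0 <= w ^+ 2 by rewrite -realEsqr.
  have hb : g * k2 - w ^+ 2 < 0 by rewrite subr_lt0 (lt_le_trans gk2 w2).
  have ra : g * k1 - w ^+ 2 \is Num.real by rewrite rpredB ?rpredM ?rpredX.
  have rb : g * k2 - w ^+ 2 \is Num.real by rewrite rpredB ?rpredM ?rpredX.
  have rc : 4 * w ^+ 2 \is Num.real by rewrite rpredM ?rpredX ?rpred_nat.
  have eT : g * k1 - w ^+ 2 + (g * k2 - w ^+ 2) + 4 * w ^+ 2 = g * (k1 + k2) + 2 * w ^+ 2 by ring.
  have eD : (g * (k1 + k2) + 2 * w ^+ 2) ^+ 2 - 4 * ((g * k1 - w ^+ 2) * (g * k2 - w ^+ 2))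
      = g ^+ 2 * (k1 - k2) ^+ 2 + 8 * g * w ^+ 2 * (k1 + k2) by ring.
  have eP : (0 < (g * k1 - w ^+ 2) * (g * k2 - w ^+ 2)) = (g * k1 < w ^+ 2)
    by rewrite nmulr_lgt0 // subr_lt0.
  rewrite vesselE; split.
    by move/key_fwd => []; rewrite eT eD eP.
  rewrite -eP -eD -eT; case; exact: key_back.
have g2 : 0 < g ^+ 2 by rewrite exprn_gt0.
split; [|split].
- move=> hs w rw; rewrite KEY //.
  have s0 : 0 < k1 + k2 by rewrite -(opprK k2) subr_gt0.
  split; first by case.
  move=> h; have w20 : 0 < w ^+ 2 := lt_trans gk1 h.
  split => //.
    by rewrite addr_gt0 // mulr_gt0 // ltr0n.
  apply: addr_gt0; first by rewrite mulr_gt0 // exprn_gt0 // subr_gt0 (lt_trans hk2 hk1).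
  exact: (mulr_gt0 (mulr_gt0 (mulr_gt0 _ hg) w20) s0).
- move=> hs h3 w rw; rewrite KEY //.
  have s0 : k1 + k2 < 0 by rewrite -(opprK k2) subr_lt0.
  have ns0 : 0 < - (k1 + k2) by rewrite oppr_gt0.
  have den : 0 < 8 * g * - (k1 + k2) by rewrite !mulr_gt0 ?ltr0n.
  have iden : - (g / 8) * ((k1 - k2) ^+ 2 / (k1 + k2)) - w ^+ 2 =
     (g ^+ 2 * (k1 - k2) ^+ 2 + 8 * g * w ^+ 2 * (k1 + k2)) / (8 * g * - (k1 + k2)).
    by field; rewrite ltr0_neq0 // gt_eqF.
  have eW : (w ^+ 2 < - (g / 8) * ((k1 - k2) ^+ 2 / (k1 + k2))) =
      (0 < g ^+ 2 * (k1 - k2) ^+ 2 + 8 * g * w ^+ 2 * (k1 + k2)).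
    by rewrite -subr_gt0 iden pmulr_lgt0 // invr_gt0.
  rewrite eW; split; first by case.
  case=> h1 h2; split => //.
  have -> : g * (k1 + k2) + 2 * w ^+ 2 = g * (3 * k1 + k2) + 2 * (w ^+ 2 - g * k1) by ring.
  by rewrite addr_gt0 ?mulr_gt0 ?ltr0n ?subr_gt0.
- move=> hs h3 w rw; rewrite KEY //; case=> hT _ hD.
  have s0 : k1 + k2 < 0 by rewrite -(opprK k2) subr_lt0.
  have e : g ^+ 2 * (k1 - k2) ^+ 2 + 8 * g * w ^+ 2 * (k1 + k2)
      + 4 * g * - (k1 + k2) * (g * (k1 + k2) + 2 * w ^+ 2)
      = g ^+ 2 * ((- k1 - 3 * k2) * (3 * k1 + k2)) by ring.
  have pos : 0 < g ^+ 2 * ((- k1 - 3 * k2) * (3 * k1 + k2)).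
    by rewrite -e addr_gt0 // !mulr_gt0 ?ltr0n ?oppr_gt0.
  have q : 0 < - k1 - 3 * k2.
    have -> : - k1 - 3 * k2 = - 3 * (3 * k1 + k2) + 8 * k1 by ring.
    by apply: addr_gt0; [rewrite nmulr_rgt0 // oppr_lt0 ltr0n | rewrite mulr_gt0 // ltr0n].
  have neg : g ^+ 2 * ((- k1 - 3 * k2) * (3 * k1 + k2)) < 0.
    by rewrite pmulr_rlt0 // pmulr_rlt0.
  by move: (lt_trans pos neg); rewrite ltxx.
Qed.
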